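(* Let $\beta>0$ and let $p=\lfloor\beta\rfloor$. Then $\Phi_\beta(p,0)=1$ and $\Phi_\beta(p+1,0)<1$.
   Context: For $\beta>0$, $W_\beta$ is the random walk on $\mathbb{Z}^2$ starting at the origin which, independently at each step, moves from $(a,b)$ to $(a+1,b)$ with probability $1/(\beta+1)$ and to $(a,b+1)$ with probability $\beta/(\beta+1)$. For a nonnegative integer $q$, $\Phi_\beta(q,0)$ is the probability that $W_\beta$ visits at least one of the lattice points $(n,qn+1)$, $n\ge 0$ (i.e. crosses the line $y=qx$). *)

(* Defs.v *)
From Stdlib Require Import Reals Lra List Arith.
Open Scope R_scope.

(* A path of the walk W_beta with N steps is a list of N booleans:
   true  = step (a,b) -> (a,b+1), probability beta/(beta+1);
   false = step (a,b) -> (a+1,b), probability 1/(beta+1). *)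

Fixpoint all_paths (N : nat) : list (list bool) :=
  match N with
  | O => nil :: nil
  | S n => map (cons true) (all_paths n) ++ map (cons false) (all_paths n)
  end.

Definition step_prob (beta : R) (x : bool) : R :=
  if x then beta / (beta + 1) else 1 / (beta + 1).

Fixpoint path_prob (beta : R) (s : list bool) : R :=
  match s with
  | nil => 1
  | x :: t => step_prob beta x * path_prob beta t
  end.

Fixpoint hits (q a b : nat) (s : list bool) : bool :=
  if Nat.eqb b (q * a + 1) then true
  else match s with
       | nil => false
       | x :: t => if x then hits q a (S b) t else hits q (S a) b t
       end.

Definition hit_prob_upto (beta : R) (q N : nat) : R :=
  fold_right Rplus 0
    (map (fun s => path_prob beta s * (if hits q 0 0 s then 1 else 0))
         (all_paths N)).

(* Phi_beta(q,0) = l : the probability of the (countable increasing union of)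
   events "visits some (n,qn+1) within N steps", i.e. the limit as N -> oo. *)
Definition Phi_is (beta : R) (q : nat) (l : R) : Prop :=
  Un_cv (hit_prob_upto beta q) l.

(* Main.v *)
Require Import Defs.
From Stdlib Require Import Reals Lra Lia ZArith List.
Open Scope R_scope.

Definition sumP (N : nat) (f : list bool -> R) : R :=
  fold_right Rplus 0 (map f (all_paths N)).

Lemma fold_app (l1 l2 : list R) :
  fold_right Rplus 0 (l1 ++ l2) = fold_right Rplus 0 l1 + fold_right Rplus 0 l2.
Proof. induction l1; simpl. ring. rewrite IHl1; ring. Qed.

Lemma sumP_S N f : sumP (S N) f =
  sumP N (fun s => f (true :: s)) + sumP N (fun s => f (false :: s)).
Proof. unfold sumP; simpl. rewrite map_app, fold_app, !map_map. reflexivity. Qed.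

Lemma sumP_ext N f g : (forall s, f s = g s) -> sumP N f = sumP N g.
Proof. intros H; unfold sumP; rewrite (map_ext f g H); reflexivity. Qed.

Lemma sumP_scal N a f : sumP N (fun s => a * f s) = a * sumP N f.
Proof.
  revert f; induction N; intros f.
  - unfold sumP; simpl; ring.
  - rewrite !sumP_S. rewrite (IHN (fun s => f (true :: s))), (IHN (fun s => f (false :: s))). ring.
Qed.

Lemma sum_prob beta N : 0 < beta -> sumP N (path_prob beta) = 1.
Proof.
  intros Hb; induction N.
  - unfold sumP; simpl; ring.
  - rewrite sumP_S.
    assert (E1 : sumP N (fun s => path_prob beta (true :: s)) = step_prob beta true * sumP N (path_prob beta))
      by (rewrite <- sumP_scal; reflexivity).
    assert (E2 : sumP N (fun s => path_prob beta (false :: s)) = step_prob beta false * sumP N (path_prob beta))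
      by (rewrite <- sumP_scal; reflexivity).
    rewrite E1, E2, IHN. unfold step_prob. field. lra.
Qed.

Fixpoint hz (q d : Z) (s : list bool) : bool :=
  if Z.eqb d 1 then true
  else match s with
       | nil => false
       | x :: t => if x then hz q (d + 1) t else hz q (d - q) t
       end.

Lemma hz_eq q d s : hz q d s = if Z.eqb d 1 then true
  else match s with nil => false | x :: t => if x then hz q (d + 1) t else hz q (d - q) t end.
Proof. destruct s; reflexivity. Qed.

Lemma hits_eq q a b s : hits q a b s = if Nat.eqb b (q * a + 1) then true
  else match s with nil => false | x :: t => if x then hits q a (S b) t else hits q (S a) b t end.
Proof. destruct s; reflexivity. Qed.

Lemma hits_hz q s : forall a b,
  hits q a b s = hz (Z.of_nat q) (Z.of_nat b - Z.of_nat q * Z.of_nat a) s.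
Proof.
  induction s as [|x t IH]; intros a b; rewrite hits_eq, hz_eq;
  destruct (Nat.eqb_spec b (q * a + 1)); destruct (Z.eqb_spec (Z.of_nat b - Z.of_nat q * Z.of_nat a) 1);
  try reflexivity; try (exfalso; nia).
  destruct x.
  - rewrite IH. f_equal. lia.
  - rewrite IH. f_equal. nia.
Qed.

Fixpoint Gr (c c' : R) (q : Z) (N : nat) (d : Z) : R :=
  if Z.eqb d 1 then 1 else
  match N with
  | O => 0
  | S n => c * Gr c c' q n (d + 1) + c' * Gr c c' q n (d - q)
  end.

Lemma Gr_eq c c' q N d : Gr c c' q N d = if Z.eqb d 1 then 1 else
  match N with O => 0 | S n => c * Gr c c' q n (d + 1) + c' * Gr c c' q n (d - q) end.
Proof. destruct N; reflexivity. Qed.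

Lemma sum_G beta q N : 0 < beta -> forall d,
  sumP N (fun s => path_prob beta s * (if hz q d s then 1 else 0)) =
  Gr (beta / (beta + 1)) (1 / (beta + 1)) q N d.
Proof.
  intros Hb; induction N; intros d; rewrite Gr_eq;
  destruct (Z.eqb d 1) eqn:Ed.
  - unfold sumP; simpl. rewrite Ed. ring.
  - unfold sumP; simpl. rewrite Ed. ring.
  - transitivity (sumP (S N) (path_prob beta)); [| apply sum_prob; exact Hb].
    apply sumP_ext. intros s. rewrite hz_eq, Ed. ring.
  - rewrite sumP_S.
    rewrite (sumP_ext N _ (fun s => beta / (beta+1) * (path_prob beta s * (if hz q (d+1) s then 1 else 0)))).
    2:{ intros s. rewrite hz_eq, Ed. simpl. unfold step_prob. ring. }
    rewrite (sumP_ext N (fun s => path_prob beta (false :: s) * _) (fun s => 1 / (beta+1) * (path_prob beta s * (if hz q (d-q) s then 1 else 0)))).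
    2:{ intros s. rewrite hz_eq, Ed. simpl. unfold step_prob. ring. }
    rewrite !sumP_scal, !IHN. reflexivity.
Qed.

Lemma hit_Gr beta q N : 0 < beta ->
  hit_prob_upto beta q N = Gr (beta / (beta + 1)) (1 / (beta + 1)) (Z.of_nat q) N 0.
Proof.
  intros Hb. rewrite <- sum_G by exact Hb. unfold hit_prob_upto.
  apply (sumP_ext N). intros s. rewrite hits_hz. replace (Z.of_nat 0 - Z.of_nat q * Z.of_nat 0)%Z with 0%Z by lia. reflexivity.
Qed.

Section A.
Variables (c c' : R) (qn : nat).
Hypotheses (Hc : 0 < c) (Hc' : 0 <= c') (Hcc : c + c' = 1).
Let q := Z.of_nat qn.

Lemma Gr_bnd N : forall d, 0 <= Gr c c' q N d <= 1.
Proof.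
  induction N; intros d; rewrite Gr_eq; destruct (Z.eqb d 1); try lra.
  destruct (IHN (d+1)%Z), (IHN (d - q)%Z). nra.
Qed.

Lemma Gr_mono N : forall d, Gr c c' q N d <= Gr c c' q (S N) d.
Proof.
  induction N; intros d.
  - rewrite (Gr_eq _ _ _ 1), Gr_eq. destruct (Z.eqb d 1); [lra|].
    destruct (Gr_bnd 0 (d+1)%Z), (Gr_bnd 0 (d-q)%Z). nra.
  - rewrite (Gr_eq _ _ _ (S (S N))), Gr_eq. destruct (Z.eqb d 1); [lra|].
    specialize (IHN (d+1)%Z) as H1. specialize (IHN (d-q)%Z) as H2.
    apply Rplus_le_compat; apply Rmult_le_compat_l; lra.
Qed.

Lemma Gr_upper (lam : R) : 1 < lam -> c * lam + c' * / lam ^ qn <= 1 ->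
  forall N d, (d <= 1)%Z -> Gr c c' q N d <= / lam ^ (Z.to_nat (1 - d)).
Proof.
  intros Hl Hkey. induction N; intros d Hd; rewrite Gr_eq;
  destruct (Z.eqb_spec d 1).
  - subst. simpl. lra.
  - left. apply Rinv_0_lt_compat, pow_lt; lra.
  - subst. simpl. lra.
  - assert (Hd0 : (d <= 0)%Z) by lia.
    set (k := Z.to_nat (1 - (d + 1))).
    assert (Ek1 : Z.to_nat (1 - d) = S k) by (unfold k; lia).
    assert (Ek2 : Z.to_nat (1 - (d - q)) = (S k + qn)%nat) by (unfold k, q; lia).
    pose proof (IHN (d+1)%Z ltac:(lia)) as H1. pose proof (IHN (d-q)%Z ltac:(lia)) as H2.
    fold k in H1. rewrite Ek2 in H2. rewrite Ek1.
    assert (Pk : 0 < lam ^ k) by (apply pow_lt; lra).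
    assert (Pq : 0 < lam ^ qn) by (apply pow_lt; lra).
    rewrite pow_add in H2. simpl in H2 |- *.
    apply Rle_trans with (c * / lam ^ k + c' * / (lam * lam ^ k * lam ^ qn)).
    { apply Rplus_le_compat; apply Rmult_le_compat_l; lra. }
    replace (c * / lam ^ k + c' * / (lam * lam ^ k * lam ^ qn))
      with ((c * lam + c' * / lam ^ qn) * / (lam * lam ^ k)) by (field; lra).
    rewrite <- (Rmult_1_l (/ (lam * lam ^ k))) at 2.
    apply Rmult_le_compat_r; [left; apply Rinv_0_lt_compat; nra | exact Hkey].
Qed.

Lemma pow_mono_r (g : R) (m n : nat) : 0 <= g <= 1 -> (m <= n)%nat -> g ^ n <= g ^ m.
Proof.
  intros Hg Hmn. induction Hmn. lra.
  simpl. assert (0 <= g ^ m0) by (apply pow_le; lra). nra.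
Qed.

Hypothesis Hdrift : c' * INR qn <= c.
Variable K : nat.
Hypothesis HK : (1 <= K)%nat.
Let g := c / 2.
Let th := 1 - g ^ K.
Definition Vf (d : Z) := Rmin 1 ((1 - IZR d) / (1 + INR K)).
Definition Uf (d : Z) := (1 - g ^ (Z.to_nat (1 - d))) / (1 - g).

Lemma g_bnd : 0 < g <= 1/2.
Proof. unfold g. lra. Qed.

Lemma Vf_nn d : (d <= 1)%Z -> 0 <= Vf d.
Proof.
  intros Hd. unfold Vf. apply Rmin_glb; [lra|].
  apply Rle_mult_inv_pos. apply IZR_le in Hd. lra. pose proof (pos_INR K). lra.
Qed.

Lemma Uf_nn d : 0 <= Uf d.
Proof.
  unfold Uf. pose proof g_bnd. apply Rle_mult_inv_pos; [|lra].
  pose proof (pow_mono_r g 0 (Z.to_nat (1 - d)) ltac:(lra) ltac:(lia)). rewrite pow_O in H0. lra.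
Qed.

Lemma main_low N : forall d, (d <= 1)%Z -> 1 - Gr c c' q N d <= Vf d + th ^ N * Uf d.
Proof.
  pose proof g_bnd as Hg.
  assert (Hth : 0 <= th <= 1).
  { unfold th. pose proof (pow_mono_r g 0 K ltac:(lra) ltac:(lia)). simpl in H.
    assert (0 <= g ^ K) by (apply pow_le; lra). lra. }
  induction N; intros d Hd; rewrite Gr_eq; destruct (Z.eqb_spec d 1).
  - pose proof (Vf_nn d Hd). pose proof (Uf_nn d). simpl. lra.
  - pose proof (Vf_nn d Hd). simpl.
    assert (Uf d >= 1).
    { unfold Uf. apply Rle_ge. apply (Rmult_le_reg_r (1 - g)); [lra|].
      unfold Rdiv. rewrite Rmult_assoc, Rinv_l by lra.
      pose proof (pow_mono_r g 1 (Z.to_nat (1 - d)) ltac:(lra) ltac:(lia)). rewrite pow_1 in H0. lra. }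
    lra.
  - pose proof (Vf_nn d Hd). pose proof (Uf_nn d).
    assert (0 <= th ^ S N) by (apply pow_le; lra). nra.
  - assert (Hd0 : (d <= 0)%Z) by lia.
    assert (HthN : 0 <= th ^ S N) by (apply pow_le; lra).
    pose proof (Uf_nn d).
    destruct (Z_le_gt_dec d (- Z.of_nat K)) as [Hfar | Hnear].
    + assert (Vf d = 1).
      { unfold Vf. apply Rmin_left. apply IZR_le in Hfar. rewrite opp_IZR, <- INR_IZR_INZ in Hfar.
        pose proof (pos_INR K). apply (Rmult_le_reg_r (1 + INR K)); [lra|].
        unfold Rdiv. rewrite Rmult_assoc, Rinv_l by lra. lra. }
      destruct (Gr_bnd N (d+1)%Z), (Gr_bnd N (d-q)%Z). nra.
    + pose proof (IHN (d+1)%Z ltac:(lia)) as H1. pose proof (IHN (d-q)%Z ltac:(lia)) as H2.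
      set (j := Z.to_nat (1 - (d + 1))).
      assert (Ek1 : Z.to_nat (1 - d) = S j) by (unfold j; lia).
      assert (Ek2 : Z.to_nat (1 - (d - q)) = (S j + qn)%nat) by (unfold j, q; lia).
      assert (HjK : (S j <= K)%nat) by (unfold j; lia).
      pose proof (pos_INR K) as PK.
      assert (HV : c * Vf (d+1) + c' * Vf (d - q) <= Vf d).
      { unfold Vf.
        rewrite (Rmin_right 1 ((1 - IZR d) / (1 + INR K))).
        2:{ apply Z.gt_lt, IZR_lt in Hnear. rewrite opp_IZR, <- INR_IZR_INZ in Hnear.
            apply (Rmult_le_reg_r (1 + INR K)); [lra|].
            unfold Rdiv. rewrite Rmult_assoc, Rinv_l by lra. lra. }
        apply Rle_trans with (c * ((1 - IZR (d+1)) / (1 + INR K)) + c' * ((1 - IZR (d-q)) / (1 + INR K))).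
        { apply Rplus_le_compat; apply Rmult_le_compat_l; try lra; apply Rmin_r. }
        rewrite plus_IZR, minus_IZR. unfold q. rewrite <- INR_IZR_INZ.
        apply (Rmult_le_reg_r (1 + INR K)); [lra|].
        replace ((c * ((1 - (IZR d + 1)) / (1 + INR K)) + c' * ((1 - (IZR d - INR qn)) / (1 + INR K))) * (1 + INR K))
          with (c * (1 - (IZR d + 1)) + c' * (1 - (IZR d - INR qn))) by (field; lra).
        replace ((1 - IZR d) / (1 + INR K) * (1 + INR K)) with (1 - IZR d) by (field; lra).
        nra. }
      assert (HU : c * Uf (d+1) + c' * Uf (d - q) <= th * Uf d).
      { unfold Uf. fold j. rewrite Ek1, Ek2, pow_add.
        assert (Pj : 0 <= g ^ j) by (apply pow_le; lra).
        assert (Pq : 0 <= g ^ qn) by (apply pow_le; lra).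
        pose proof (pow_mono_r g (S j) K ltac:(lra) HjK) as HgK.
        assert (PK2 : 0 <= g ^ K) by (apply pow_le; lra).
        simpl in HgK |- *. unfold th.
        apply (Rmult_le_reg_r (1 - g)); [lra|].
        replace ((c * ((1 - g ^ j) / (1 - g)) + c' * ((1 - g * g ^ j * g ^ qn) / (1 - g))) * (1 - g))
          with (c * (1 - g ^ j) + c' * (1 - g * g ^ j * g ^ qn)) by (field; lra).
        replace ((1 - g ^ K) * ((1 - g * g ^ j) / (1 - g)) * (1 - g))
          with ((1 - g ^ K) * (1 - g * g ^ j)) by (field; lra).
        assert (Ec : c = 2 * g) by (unfold g; lra). rewrite Ec.
        assert (0 <= g * g ^ j) by nra.
        assert (0 <= c' * (g * g ^ j * g ^ qn)) by (apply Rmult_le_pos; [lra| apply Rmult_le_pos; nra]).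
        assert (0 <= g ^ K * (g * g ^ j)) by nra.
        nra. }
      assert (E : 1 - (c * Gr c c' q N (d + 1) + c' * Gr c c' q N (d - q))
                  = c * (1 - Gr c c' q N (d + 1)) + c' * (1 - Gr c c' q N (d - q))) by (replace c' with (1 - c) by lra; ring).
      rewrite E.
      apply Rle_trans with (c * (Vf (d + 1) + th ^ N * Uf (d + 1)) + c' * (Vf (d - q) + th ^ N * Uf (d - q))).
      { apply Rplus_le_compat; apply Rmult_le_compat_l; lra. }
      assert (0 <= th ^ N) by (apply pow_le; lra).
      simpl. nra.
Qed.

End A.

Lemma bernoulli (x : R) (n : nat) : 0 <= x -> 1 + INR n * x <= (1 + x) ^ n.
Proof.
  intros Hx. induction n. simpl; lra.
  rewrite S_INR. simpl. assert (0 <= INR n * x) by (apply Rmult_le_pos; [apply pos_INR|lra]). nra.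
Qed.

Theorem mainTheorem9 (beta : R) (p : nat) :
  0 < beta -> INR p <= beta < INR p + 1 ->
  Phi_is beta p 1 /\ (exists l : R, Phi_is beta (S p) l /\ l < 1).
Proof.
  intros Hb [Hp1 Hp2].
  set (c := beta / (beta + 1)). set (c' := 1 / (beta + 1)).
  assert (Hc : 0 < c) by (unfold c; apply Rdiv_lt_0_compat; lra).
  assert (Hc' : 0 < c') by (unfold c'; apply Rdiv_lt_0_compat; lra).
  assert (Hcc : c + c' = 1) by (unfold c, c'; field; lra).
  split.
  - unfold Phi_is, Un_cv. intros eps Heps.
    destruct (INR_unbounded (2 / eps)) as [K0 HK0].
    set (K := S K0).
    assert (HK : (1 <= K)%nat) by (unfold K; lia).
    assert (Hdrift : c' * INR p <= c).
    { replace (c' * INR p) with (INR p * / (beta + 1)) by (unfold c'; field; lra).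
      unfold c, Rdiv. apply Rmult_le_compat_r. left; apply Rinv_0_lt_compat; lra. lra. }
    set (g := c / 2).
    assert (Hg : 0 < g < 1) by (unfold g; lra).
    set (th := 1 - g ^ K).
    assert (HgK : 0 < g ^ K <= 1).
    { split. apply pow_lt; lra. rewrite <- (pow1 K). apply pow_incr. lra. }
    assert (Hth : Rabs th < 1) by (unfold th; rewrite Rabs_right; lra).
    destruct (pow_lt_1_zero th Hth (eps / 2) ltac:(lra)) as [N HN].
    exists N. intros n Hn.
    rewrite hit_Gr by lra. fold c c'.
    pose proof (main_low c c' p Hc ltac:(lra) Hcc Hdrift K HK n 0%Z ltac:(lia)) as H.
    fold g th in H.
    assert (EU : Uf c 0 = 1).
    { unfold Uf. simpl. fold g. field. lra. }
    rewrite EU in H.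
    assert (HV : Vf K 0 <= 1 / (1 + INR K)).
    { unfold Vf. apply Rle_trans with ((1 - IZR 0) / (1 + INR K)). apply Rmin_r. right. replace (IZR 0) with 0 by reflexivity. field.
      pose proof (pos_INR K); lra. }
    assert (HKe : 1 / (1 + INR K) < eps / 2).
    { unfold K. rewrite S_INR. pose proof (pos_INR K0).
      apply (Rmult_lt_reg_r (1 + (INR K0 + 1))). lra.
      replace (1 / (1 + (INR K0 + 1)) * (1 + (INR K0 + 1))) with 1 by (field; lra).
      replace (eps / 2 * (1 + (INR K0 + 1))) with (eps * (INR K0 + 2) / 2) by field.
      assert (2 / eps * eps = 2) by (field; lra).
      nra. }
    pose proof (HN n Hn) as Hn'. rewrite Rabs_right in Hn' by (apply Rle_ge, pow_le; unfold th; lra).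
    pose proof (Gr_bnd c c' p Hc ltac:(lra) Hcc n 0%Z).
    unfold R_dist. rewrite Rabs_left1 by lra. lra.
  - set (q := INR (S p)).
    assert (Hq : beta < q) by (unfold q; rewrite S_INR; lra).
    set (eps := (q - beta) / (beta * q)).
    assert (Heps : 0 < eps) by (unfold eps; apply Rdiv_lt_0_compat; nra).
    set (lam := 1 + eps).
    assert (Hlam : 1 < lam) by (unfold lam; lra).
    assert (Hpow : q / beta <= lam ^ (S p)).
    { unfold lam. eapply Rle_trans; [| apply bernoulli; lra]. fold q. right. unfold eps. field. lra. }
    assert (Hkey : c * lam + c' * / lam ^ (S p) <= 1).
    { assert (/ lam ^ (S p) <= beta / q).
      { replace (beta / q) with (/ (q / beta)) by (field; lra).
        apply Rinv_le_contravar. apply Rdiv_lt_0_compat; lra. exact Hpow. }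
      apply Rle_trans with (c * lam + c' * (beta / q)). apply Rplus_le_compat_l, Rmult_le_compat_l; lra.
      right. unfold c, c', lam, eps. field. lra. }
    assert (Hgrow : Un_growing (hit_prob_upto beta (S p))).
    { intros n. rewrite !hit_Gr by lra. fold c c'. apply Gr_mono; lra. }
    assert (Hub : has_ub (hit_prob_upto beta (S p))).
    { exists 1. intros x [i ->]. rewrite hit_Gr by lra. apply (Gr_bnd c c' (S p)); lra. }
    destruct (growing_cv _ Hgrow Hub) as [l Hl].
    exists l. split. exact Hl.
    assert (Hle : forall n, hit_prob_upto beta (S p) n <= / lam).
    { intros n. rewrite hit_Gr by lra. fold c c'.
      pose proof (Gr_upper c c' (S p) Hc ltac:(lra) lam Hlam Hkey n 0%Z ltac:(lia)) as H.
      simpl in H. rewrite Rmult_1_r in H. exact H. }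
    assert (l <= / lam).
    { destruct (Rle_or_lt l (/ lam)) as [|Hgt]; [assumption|].
      destruct (Hl (l - / lam) ltac:(lra)) as [N HN].
      specialize (HN N (le_n N)). unfold R_dist in HN. specialize (Hle N).
      apply Rabs_def2 in HN. lra. }
    assert (/ lam < 1). { rewrite <- Rinv_1. apply Rinv_lt_contravar; lra. }
    lra.
Qed.
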